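(* Let $A_1,\ldots,A_m\in\mathbb{R}^{n\times n}$ with $\mathrm{JSR}(\{A_i\}_{i=1}^m)<1$, and let $c:\mathbb{R}^n\to\mathbb{R}_{\geq0}$ be Lipschitz continuous (with respect to the Euclidean norm) on a neighborhood $X\subseteq\mathbb{R}^n$ of the origin, with Lipschitz constant $L$. Let $\rho<1$ and let $\lVert\cdot\rVert_*$ be a norm on $\mathbb{R}^n$ such that for every solution $\xi$ of $\xi(t+1)=A_{\sigma(t)}\xi(t)$ (for any switching signal $\sigma$) and all $t\in\mathbb{N}$, $\lVert\xi(t)\rVert_*\leq\rho^t\lVert\xi(0)\rVert_*$. Let $\eta>0$ be such that $B_*(\eta):=\{x\in\mathbb{R}^n:\lVert x\rVert_*\leq\eta\}\subseteq X$. Then the optimal value function $J^\star$ and the worst-case value function $J^\circ$ are Lipschitz continuous on $B_*(\eta)$ (with respect to the Euclidean norm), with Lipschitz constant $M=\kappa(\lVert\cdot\rVert_* )L/(1-\rho)$.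
   Context: A discrete-time switched linear system $\{A_i\}_{i=1}^m$ is $\xi(t+1)=A_{\sigma(t)}\xi(t)$, $t\in\mathbb{N}$, with switching signal $\sigma:\mathbb{N}\to\{1,\ldots,m\}$; $\xi(t,x,\sigma)$ denotes the solution at time $t$ with $\xi(0)=x$. The joint spectral radius $\mathrm{JSR}(\{A_i\})$ is the infimum of $r\geq0$ such that there is $C\geq0$ with $\lVert\xi(t)\rVert\leq Cr^t\lVert\xi(0)\rVert$ for all solutions and all $t$. Given a cost $c:\mathbb{R}^n\to\mathbb{R}_{\geq0}$, $J(x,\sigma)=\sum_{t=0}^\infty c(\xi(t,x,\sigma))$, $J^\star(x)=\inf_\sigma J(x,\sigma)$ (optimal value function) and $J^\circ(x)=\sup_\sigma J(x,\sigma)$ (worst-case value function). $\lVert\cdot\rVert$ is the Euclidean norm, and for a norm $\lVert\cdot\rVert'$ its eccentricity is $\kappa(\lVert\cdot\rVert')=\max_{\lVert x\rVert=1}\lVert x\rVert'/\min_{\lVert x\rVert=1}\lVert x\rVert'$. *)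

(* Defs.v *)
From HB Require Import structures.
From mathcomp Require Import all_boot all_order all_algebra.
From mathcomp Require Import all_classical all_reals all_analysis.
Set Implicit Arguments. Unset Strict Implicit. Unset Printing Implicit Defensive.
Import Order.TTheory GRing.Theory Num.Theory.
Local Open Scope classical_set_scope.
Local Open Scope ring_scope.

Definition euclid {R : realType} {n : nat} (x : 'cV[R]_n) : R :=
  Num.sqrt (\sum_(i < n) (x i 0) ^+ 2).

Definition is_norm {R : realType} {n : nat} (N : 'cV[R]_n -> R) : Prop :=
  [/\ forall x, N x = 0 -> x = 0,
      forall (a : R) x, N (a *: x) = `|a| * N x &
      forall x y, N (x + y) <= N x + N y].

Fixpoint traj {R : realType} {n m : nat} (A : 'I_m -> 'M[R]_n)
  (sigma : nat -> 'I_m) (x : 'cV[R]_n) (t : nat) : 'cV[R]_n :=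
  match t with
  | 0%N => x
  | t'.+1 => A (sigma t') *m traj A sigma x t'
  end.

Definition JSR {R : realType} {n m : nat} (A : 'I_m -> 'M[R]_n) : R :=
  inf [set r : R | 0 <= r /\ exists C : R, 0 <= C /\
        forall (sigma : nat -> 'I_m) (x : 'cV[R]_n) (t : nat),
          euclid (traj A sigma x t) <= C * r ^+ t * euclid x].

Definition kappa {R : realType} {n : nat} (N : 'cV[R]_n -> R) : R :=
  sup [set N x | x in [set x : 'cV[R]_n | euclid x = 1]] /
  inf [set N x | x in [set x : 'cV[R]_n | euclid x = 1]].

Definition Jcost {R : realType} {n m : nat} (A : 'I_m -> 'M[R]_n)
  (c : 'cV[R]_n -> R) (x : 'cV[R]_n) (sigma : nat -> 'I_m) : \bar R :=
  (\sum_(0 <= t <oo) (c (traj A sigma x t))%:E)%E.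

Definition Jstar {R : realType} {n m : nat} (A : 'I_m -> 'M[R]_n)
  (c : 'cV[R]_n -> R) (x : 'cV[R]_n) : \bar R :=
  ereal_inf [set Jcost A c x sigma | sigma in [set: nat -> 'I_m]].

Definition Jcirc {R : realType} {n m : nat} (A : 'I_m -> 'M[R]_n)
  (c : 'cV[R]_n -> R) (x : 'cV[R]_n) : \bar R :=
  ereal_sup [set Jcost A c x sigma | sigma in [set: nat -> 'I_m]].

(* Main.v *)
Require Import Defs.
From HB Require Import structures.
From mathcomp Require Import all_boot all_order all_algebra.
From mathcomp Require Import all_classical all_reals all_analysis.
From mathcomp Require Import ring lra.
Import Order.TTheory GRing.Theory Num.Theory.
Local Open Scope classical_set_scope.
Local Open Scope ring_scope.

Section Aux.
Variables (R : realType) (n : nat).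
Implicit Types (x y : 'cV[R]_n).

Lemma euclid_ge0 x : 0 <= euclid x.
Proof. exact: sqrtr_ge0. Qed.

Lemma euclid_sq x : euclid x ^+ 2 = \sum_(i < n) (x i 0) ^+ 2.
Proof. by rewrite /euclid sqr_sqrtr // sumr_ge0 // => i _; rewrite sqr_ge0. Qed.

Lemma euclidZ (a : R) x : euclid (a *: x) = `|a| * euclid x.
Proof.
rewrite /euclid -sqrtr_sqr -sqrtrM ?sqr_ge0 //; congr Num.sqrt.
rewrite mulr_sumr; apply: eq_bigr => i _; by rewrite mxE exprMn.
Qed.

Lemma euclid_eq0 x : euclid x = 0 -> x = 0.
Proof.
move=> h; have hs : \sum_(i < n) (x i 0) ^+ 2 = 0 by rewrite -euclid_sq h expr0n.
apply/matrixP => i j; rewrite ord1 mxE.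
have := @psumr_eq0P _ _ xpredT (fun i => x i 0 ^+ 2) (fun i _ => sqr_ge0 (x i 0)) hs i isT.
by move/eqP; rewrite sqrf_eq0 => /eqP.
Qed.

Lemma coord_le_euclid x i : `|x i 0| <= euclid x.
Proof.
rewrite -(ler_pXn2r (n:=2)) // ?nnegrE ?euclid_ge0 //.
rewrite euclid_sq real_normK ?num_real //.
rewrite (bigD1 i) //= lerDl sumr_ge0 // => k _; exact: sqr_ge0.
Qed.

Variable N : 'cV[R]_n -> R.
Hypothesis hN : is_norm N.

Lemma N0 : N 0 = 0.
Proof. by case: hN => _ hZ _; rewrite -(scale0r (0 : 'cV[R]_n)) hZ normr0 mul0r. Qed.

Lemma NN x : N (- x) = N x.
Proof. by case: hN => _ hZ _; rewrite -scaleN1r hZ normrN normr1 mul1r. Qed.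

Lemma Nge0 x : 0 <= N x.
Proof.
case: hN => _ _ hD; have := hD x (- x); rewrite subrr N0 NN.
by move=> h; lra.
Qed.

Lemma NZ (a : R) x : N (a *: x) = `|a| * N x.
Proof. by case: hN. Qed.

Lemma ND x y : N (x + y) <= N x + N y.
Proof. by case: hN. Qed.

Lemma N_diff x y : `|N x - N y| <= N (x - y).
Proof.
have h1 := ND (x - y) y; rewrite subrK in h1.
have h2 := ND (y - x) x; rewrite subrK in h2.
have e : N (y - x) = N (x - y) by rewrite -NN opprB.
rewrite e in h2.
rewrite ler_norml; apply/andP; split; lra.
Qed.

Lemma N_sum (I : finType) (F : I -> 'cV[R]_n) :
  N (\sum_i F i) <= \sum_i N (F i).
Proof.
apply: (big_ind2 (fun u v => N u <= v)); first by rewrite N0.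
  by move=> a b c d h1 h2; apply: le_trans (ND _ _) _; exact: lerD.
by [].
Qed.

Definition Bn := \sum_(i < n) N (delta_mx i 0).

Lemma Bn_ge0 : 0 <= Bn.
Proof. by apply: sumr_ge0 => i _; exact: Nge0. Qed.

Lemma N_coord x : N x <= \sum_(i < n) `|x i 0| * N (delta_mx i 0).
Proof.
rewrite {1}(matrix_sum_delta x).
apply: le_trans; first exact: N_sum.
apply: ler_sum => i _.
by rewrite big_ord1 NZ.
Qed.

Lemma N_upper x : N x <= Bn * euclid x.
Proof.
apply: le_trans (N_coord x) _; rewrite /Bn mulr_suml; apply: ler_sum => i _.
by rewrite mulrC ler_wpM2l ?Nge0 ?coord_le_euclid.
Qed.

End Aux.
Section Lower0.
Import numFieldTopology.Exports numFieldNormedType.Exports.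

Lemma mxentry_le_norm {R : realType} {p q} (M : 'M[R]_(p, q)) i j :
  `|M i j| <= `|M|.
Proof.
rewrite [leRHS]/Num.norm /= mx_normrE.
by apply/bigmax_geP; right; exists (i, j).
Qed.

Section Lower.
Variables (R : realType) (n : nat) (N : 'cV[R]_n -> R).
Hypothesis hN : is_norm N.

Lemma N_lower : exists2 d : R, 0 < d & forall x, d * euclid x <= N x.
Proof.
case: n N hN => [|n'] N' hN'.
  exists 1 => // x; have -> : x = 0 by apply/matrixP => -[].
  rewrite (_ : euclid 0 = 0) ?mulr0 ?(@Nge0 _ _ _ hN') //.
  by rewrite /euclid big_ord0 sqrtr0.
pose f (v : 'rV[R]_n'.+1) := N' v^T.
pose K := [set v : 'rV[R]_n'.+1 | `|v| = 1].
have Kne : K !=set0.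
  pose v : 'rV[R]_n'.+1 := const_mx 1.
  have vn0 : `|v| != 0.
    rewrite normr_eq0; apply/negP => /eqP/matrixP/(_ 0 0).
    by rewrite !mxE => /eqP; rewrite oner_eq0.
  exists (`|v|^-1 *: v); rewrite /K /= normrZ normrV ?unitfE // normr_id.
  by rewrite mulVf.
have Kc : compact K.
  apply: bounded_closed_compact.
    suff h : [bounded x | x in K] by exact: h.
    rewrite /bounded_near; near=> M; move=> v /= ->; near: M.
    by apply: nbhs_pinfty_ge; exact: num_real.
  rewrite (_ : K = Num.norm @^-1` [set x : R | x = 1]) //.
  apply: preimage_closed; last exact: closed_eq.
  by move=> v _; exact: norm_continuous.
have fc : continuous f.
  move=> v; apply/(@cvgrPdist_lt _ _ _ (nbhs v)) => e e0.
  have B0 := @Bn_ge0 _ _ _ hN'.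
  have eB : 0 < e / (Bn R n'.+1 N' + 1) by rewrite divr_gt0 // ltr_wpDl.
  near=> z.
  apply: le_lt_trans (@N_diff _ _ _ hN' _ _) _.
  apply: le_lt_trans (@N_coord _ _ _ hN' _) _.
  apply: (@le_lt_trans _ _ (\sum_(i < n'.+1) `|v - z| * N' (delta_mx i 0))).
    apply: ler_sum => i _; rewrite ler_wpM2r ?(@Nge0 _ _ _ hN') //.
    have -> : (v^T - z^T) i 0 = (v - z) 0 i by rewrite !mxE.
    exact: mxentry_le_norm.
  rewrite -mulr_sumr.
  have hz : `|v - z| < e / (Bn R n'.+1 N' + 1).
    near: z; exact: (@cvgr_dist_lt _ _ _ (nbhs v) _ id v (cvg_id)).
  rewrite -/(Bn R n'.+1 N'); rewrite ltr_pdivlMr ?ltr_wpDl // in hz.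
  have := normr_ge0 (v - z); nra.
have [c cK cmin] := compact_EVT_min Kne Kc (continuous_subspaceT fc).
have c1 : `|c| = 1 by move: cK; rewrite inE.
have d0 : 0 < f c.
  rewrite lt_neqAle (@Nge0 _ _ _ hN') andbT eq_sym; apply/negP => /eqP h.
  case: hN' => h0 _ _; have := h0 _ h => /(congr1 trmx); rewrite trmxK trmx0.
  by move=> c0; move: c1; rewrite c0 normr0 => /eqP; rewrite eq_sym oner_eq0.
exists (f c / n'.+1%:R); first by rewrite divr_gt0.
move=> x; have [->|xn0] := eqVneq x 0.
  rewrite (_ : euclid 0 = 0) ?mulr0 ?(@Nge0 _ _ _ hN') //.
  by rewrite -(scale0r (0 : 'cV[R]_n'.+1)) euclidZ normr0 mul0r.
set mu := `|x^T|.
have mu0 : 0 < mu.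
  by rewrite normr_gt0; apply: contra xn0 => /eqP/(congr1 trmx); rewrite trmxK trmx0 => ->.
have hK : (mu^-1 *: x^T) \in K.
  by rewrite inE /K /= normrZ normrV ?unitfE ?gt_eqF // normr_id mulVf ?gt_eqF.
have hc := cmin _ hK.
have mui : 0 <= mu^-1 by rewrite invr_ge0 ltW.
rewrite /f linearZ /= trmxK (@NZ _ _ _ hN') (ger0_norm mui) in hc.
rewrite -/(f c) ler_pdivlMl // in hc.
have he : euclid x <= n'.+1%:R * mu.
  have hm : 0 <= n'.+1%:R * mu by rewrite mulr_ge0 // ltW.
  rewrite -(ler_pXn2r (n:=2)) ?nnegrE ?euclid_ge0 //.
  rewrite euclid_sq exprMn.
  apply: (@le_trans _ _ (\sum_(i < n'.+1) mu ^+ 2)).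
    apply: ler_sum => i _; rewrite -real_normK ?num_real // lerXn2r ?nnegrE //.
    rewrite ltW //.
    by have := mxentry_le_norm (x^T) 0 i; rewrite mxE.
  rewrite sumr_const card_ord -[X in X <= _]mulr_natr mulrC.
  apply: ler_wpM2r; first exact: sqr_ge0.
  by rewrite -natrX ler_nat expnS leq_pmulr // expn_gt0.
rewrite mulrAC ler_pdivrMr ?ltr0n //.
apply: (le_trans (ler_wpM2l (ltW d0) he)); rewrite mulrCA mulrC ler_wpM2r //.
by rewrite mulrC.
Unshelve. all: by end_near.
Qed.
End Lower.

End Lower0.

Lemma geom_partial (R : realType) (rho : R) N :
  (\sum_(0 <= t < N) rho ^+ t) * (1 - rho) = 1 - rho ^+ N.
Proof.
elim: N => [|N IH]; first by rewrite big_geq // mul0r expr0 subrr.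
rewrite big_nat_recr //= mulrDl IH exprS; ring.
Qed.

Lemma geom_bound (R : realType) (K rho : R) : 0 <= K -> 0 <= rho < 1 ->
  (\sum_(0 <= t <oo) (K * rho ^+ t)%:E <= (K / (1 - rho))%:E)%E.
Proof.
move=> K0 /andP[r0 r1].
apply: lime_le; first by apply: is_cvg_nneseries => t _ _; rewrite lee_fin mulr_ge0 // exprn_ge0.
apply: nearW => N; rewrite sumEFin lee_fin -mulr_sumr ler_wpM2l //.
have h1 : 0 < 1 - rho by rewrite subr_gt0.
rewrite -[X in _ <= X]div1r ler_pdivlMr // geom_partial lerBlDr lerDl exprn_ge0 //.
Qed.

Lemma series_bound (R : realType) (a b : nat -> R) (K rho : R) :
  (forall t, 0 <= a t) -> (forall t, 0 <= b t) -> 0 <= K -> 0 <= rho < 1 ->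
  (forall t, a t <= b t + K * rho ^+ t) ->
  (\sum_(0 <= t <oo) (a t)%:E <= \sum_(0 <= t <oo) (b t)%:E + (K / (1 - rho))%:E)%E.
Proof.
move=> a0 b0 K0 hr hab.
apply: (@le_trans _ _ (\sum_(0 <= t <oo) ((b t)%:E + (K * rho ^+ t)%:E))%E).
  apply: lee_nneseries => t; first by rewrite lee_fin.
  by move=> _; rewrite -EFinD lee_fin.
rewrite nneseriesD; first by apply: leeD2l; exact: geom_bound.
  by move=> t _ _; rewrite lee_fin.
by move=> t _ _; case/andP: hr => r0 _; rewrite lee_fin mulr_ge0 // exprn_ge0.
Qed.

Lemma trajB (R : realType) n m (A : 'I_m -> 'M[R]_n) sigma x y t :
  traj A sigma (x - y) t = traj A sigma x t - traj A sigma y t.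
Proof. by elim: t => [|t IH] //=; rewrite IH mulmxBr. Qed.

Theorem theorem2 (R : realType) (n m : nat) (A : 'I_m -> 'M[R]_n)
  (c : 'cV[R]_n -> R) (X : set 'cV[R]_n) (L rho eta : R)
  (Nst : 'cV[R]_n -> R) :
  JSR A < 1 ->
  (forall x, 0 <= c x) ->
  (exists r : R, 0 < r /\ forall x, euclid x < r -> X x) ->
  (forall x y, X x -> X y -> `|c x - c y| <= L * euclid (x - y)) ->
  rho < 1 ->
  is_norm Nst ->
  (forall (sigma : nat -> 'I_m) (x : 'cV[R]_n) (t : nat),
      Nst (traj A sigma x t) <= rho ^+ t * Nst x) ->
  0 < eta ->
  [set x | Nst x <= eta] `<=` X ->
  let M := kappa Nst * L / (1 - rho) in
  forall x y, Nst x <= eta -> Nst y <= eta ->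
    (Jstar A c x <= Jstar A c y + (M * euclid (x - y))%:E)%E /\
    (Jcirc A c x <= Jcirc A c y + (M * euclid (x - y))%:E)%E.
Proof.
move=> _ c0 _ hL hrho hN hcontr _ hB M x y hx hy.
have euclid0 : euclid (0 : 'cV[R]_n) = 0.
  by rewrite -(scale0r (0 : 'cV[R]_n)) euclidZ normr0 mul0r.
have [<-|xy] := eqVneq x y.
  by rewrite subrr euclid0 mulr0 !adde0; split; exact: lexx.
set z := x - y.
have z0 : z != 0 by rewrite subr_eq0.
have ez : 0 < euclid z.
  rewrite lt_neqAle euclid_ge0 andbT eq_sym; apply: contra z0 => /eqP.
  by move/euclid_eq0 => ->.
have [d d0 hd] := @N_lower _ _ _ hN.
set S := [set Nst w | w in [set w | euclid w = 1]].
have unit_of : forall v, v != 0 -> euclid ((euclid v)^-1 *: v) = 1 /\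
    Nst v = euclid v * Nst ((euclid v)^-1 *: v).
  move=> v v0; have ev : 0 < euclid v.
    rewrite lt_neqAle euclid_ge0 andbT eq_sym; apply: contra v0 => /eqP.
    by move/euclid_eq0 => ->.
  rewrite euclidZ (@NZ _ _ _ hN) ger0_norm ?invr_ge0 ?euclid_ge0 // mulVf ?gt_eqF //.
  by rewrite mulrA mulfV ?gt_eqF // mul1r.
have Sne : S !=set0.
  by exists (Nst ((euclid z)^-1 *: z)); exists ((euclid z)^-1 *: z) => //; case: (unit_of z z0).
have Slb : lbound S d by move=> _ [v v1 <-]; have := hd v; rewrite v1 mulr1.
have Sub : ubound S (Bn R n Nst).
  by move=> _ [v v1 <-]; have := @N_upper _ _ _ hN v; rewrite v1 mulr1.
have a_pos : 0 < inf S by apply: lt_le_trans d0 _; exact: lb_le_inf.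
have hlow : forall v, inf S * euclid v <= Nst v.
  move=> v; have [->|v0] := eqVneq v 0; first by rewrite euclid0 mulr0 Nge0.
  case: (unit_of v v0) => w1 ->; rewrite mulrC ler_wpM2l ?euclid_ge0 //.
  by apply: ge_inf; [exists d | exists ((euclid v)^-1 *: v)].
have hup : forall v, Nst v <= sup S * euclid v.
  move=> v; have [->|v0] := eqVneq v 0; first by rewrite euclid0 mulr0 (@N0 _ _ _ hN).
  case: (unit_of v v0) => w1 ->; rewrite mulrC ler_wpM2r ?euclid_ge0 //.
  apply: sup_upper_bound; first by split => //; exists (Bn R n Nst).
  by exists ((euclid v)^-1 *: v).
have key : forall sigma,
    (Jcost A c x sigma <= Jcost A c y sigma + (M * euclid z)%:E)%E.
  move=> sigma.
  have Nz : 0 < Nst z := lt_le_trans (mulr_gt0 a_pos ez) (hlow z).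
  have rho0 : 0 <= rho.
    have h1 := le_trans (@Nge0 _ _ _ hN _) (hcontr sigma z 1).
    by rewrite expr1 pmulr_lge0 // in h1.
  have hX : forall w t, Nst w <= eta -> X (traj A sigma w t).
    move=> w t hw; apply: hB; rewrite /=.
    apply: le_trans (hcontr sigma w t) _; apply: le_trans hw.
    by apply: ler_piMl; [exact: Nge0 | exact: exprn_ile1 (ltW hrho)].
  have L0 : 0 <= L.
    have := le_trans (normr_ge0 _) (hL x y (hX x 0%N hx) (hX y 0%N hy)).
    by rewrite -/z pmulr_lge0.
  have hK : 0 <= L * (sup S / inf S * euclid z).
    rewrite mulr_ge0 // mulr_ge0 ?euclid_ge0 // divr_ge0 ?ltW //.
    by have := lt_le_trans Nz (hup z); rewrite pmulr_lgt0.
  have := @series_bound R (fun t => c (traj A sigma x t)) (fun t => c (traj A sigma y t))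
    (L * (sup S / inf S * euclid z)) rho (fun t => c0 _) (fun t => c0 _) hK.
  rewrite rho0 hrho => /(_ isT) h.
  have -> : M * euclid z = L * (sup S / inf S * euclid z) / (1 - rho).
    by rewrite /M /kappa -/S; ring.
  apply: h => t.
  have h := hL _ _ (hX x t hx) (hX y t hy).
  rewrite -trajB -/z in h.
  have e1 : euclid (traj A sigma z t) <= sup S / inf S * euclid z * rho ^+ t.
    rewrite -(ler_pM2l a_pos); apply: le_trans (hlow _) _.
    apply: le_trans (hcontr sigma z t) _.
    have -> : inf S * (sup S / inf S * euclid z * rho ^+ t) = rho ^+ t * (sup S * euclid z).
      by field; rewrite gt_eqF.
    by apply: ler_wpM2l; [exact: exprn_ge0 | exact: hup].
  have e2 := ler_wpM2l L0 e1.
  have e3 := ler_norm (c (traj A sigma x t) - c (traj A sigma y t)).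
  rewrite mulrA in e2; rewrite mulrA.
  lra.
split.
- rewrite -leeBlDr //; apply: le_ereal_inf_tmp => _ [sigma _ <-].
  rewrite leeBlDr //; apply: le_trans (key sigma).
  by apply: ereal_inf_lbound; exists sigma.
- apply: ge_ereal_sup => _ [sigma _ <-].
  apply: le_trans (key sigma) _; rewrite leeD2r //.
  by apply: ereal_sup_ubound; exists sigma.
Qed.
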